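(* Let $\Gamma$ be a finite connected $(G,2)$-distance-transitive graph of valency $k\ge2$, and suppose $\gcd(c_2,k-1)=1$. Then either $\Gamma$ has girth $3$ or $\Gamma$ is $(G,2)$-arc-transitive.
   Context: For $G\le\mathrm{Aut}(\Gamma)$, $\Gamma$ is $(G,2)$-distance-transitive if its diameter is at least $2$, $G$ is vertex-transitive and $G_u$ is transitive on $\Gamma(u)$ and $\Gamma_2(u)$ for each $u$. $c_2$ is the number of common neighbours of two vertices at distance $2$. $\Gamma$ is $(G,2)$-arc-transitive if $G$ is transitive on vertices and on $2$-arcs (triples $(u_0,u_1,u_2)$ with $u_0\sim u_1\sim u_2$, $u_0\ne u_2$). *)

(* Defs.v *)
From mathcomp Require Import all_boot all_order all_fingroup.
Set Implicit Arguments. Unset Strict Implicit. Unset Printing Implicit Defensive.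
Open Scope group_scope.

Definition simple_graph (V : finType) (e : rel V) : Prop :=
  symmetric e /\ irreflexive e.

Definition connected_graph (V : finType) (e : rel V) : Prop :=
  forall u v, connect e u v.

Definition nbhd (V : finType) (e : rel V) (u : V) : {set V} := [set w | e u w].

Definition nbhd2 (V : finType) (e : rel V) (u : V) : {set V} :=
  [set w | [&& w != u, ~~ e u w & [exists x, e u x && e x w]]].

Definition regular (V : finType) (e : rel V) (k : nat) : Prop :=
  forall u, #|nbhd e u| = k.

Definition diam_ge2 (V : finType) (e : rel V) : Prop :=
  exists u v : V, u != v /\ ~~ e u v.

Definition automorphisms (V : finType) (e : rel V) (G : {group {perm V}}) : Prop :=
  forall g, g \in G -> forall x y, e (g x) (g y) = e x y.

Definition vertex_transitive (V : finType) (G : {group {perm V}}) : Prop :=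
  forall u v : V, exists2 g, g \in G & g u = v.

Definition stab_transitive_on (V : finType) (G : {group {perm V}}) (u : V)
    (S : {set V}) : Prop :=
  forall v w, v \in S -> w \in S -> exists2 g, g \in G & (g u = u /\ g v = w).

Definition G2_distance_transitive (V : finType) (e : rel V)
    (G : {group {perm V}}) : Prop :=
  [/\ automorphisms e G, diam_ge2 e, vertex_transitive G &
      forall u, stab_transitive_on G u (nbhd e u) /\
                stab_transitive_on G u (nbhd2 e u)].

Definition has_c2 (V : finType) (e : rel V) (c2 : nat) : Prop :=
  forall u w, w \in nbhd2 e u -> #|nbhd e u :&: nbhd e w| = c2.

Definition two_arc (V : finType) (e : rel V) (a : V * V * V) : bool :=
  [&& e a.1.1 a.1.2, e a.1.2 a.2 & a.1.1 != a.2].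

Definition G2_arc_transitive (V : finType) (e : rel V)
    (G : {group {perm V}}) : Prop :=
  vertex_transitive G /\
  forall a b, two_arc e a -> two_arc e b ->
    exists2 g, g \in G &
      [/\ g a.1.1 = b.1.1, g a.1.2 = b.1.2 & g a.2 = b.2].

(* girth 3: the graph contains a 3-cycle (triangle); since a simple graph
   has no cycles of length < 3, girth = 3 iff a triangle exists. *)
Definition girth3 (V : finType) (e : rel V) : Prop :=
  exists x y z : V, [&& e x y, e y z & e z x].

(* Main.v *)
Require Import Defs.
From mathcomp Require Import all_boot all_order all_fingroup.
Set Implicit Arguments. Unset Strict Implicit.

Lemma card_fibers (T T' : finType) (A : {set T}) (B : {set T'}) (f : T -> T') c :
  (forall x, x \in A -> f x \in B) ->
  (forall y, y \in B -> #|[set x in A | f x == y]| = c) -> #|A| = (#|B| * c)%N.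
Proof.
move=> fAB Hc.
rewrite -sum1_card (partition_big f (mem B)) //=.
rewrite -sum_nat_const; apply: eq_bigr => y yB.
by rewrite -(Hc y yB) sum1_card; apply: eq_card => x; rewrite inE.
Qed.

Definition pact (V : finType) (h : {perm V}) (p : V * V) := (h p.1, h p.2).
Definition Pset (V : finType) (e : rel V) (u : V) : {set V * V} :=
  [set p | [&& e u p.1, e p.1 p.2 & p.2 != u]].
Definition Gu (V : finType) (G : {group {perm V}}) (u : V) : {set {perm V}} :=
  [set g in G | g u == u].
Definition Orb (V : finType) (G : {group {perm V}}) (u : V) (p0 : V * V) : {set V * V} :=
  [set pact g p0 | g in Gu G u].

Lemma GuM (V : finType) (G : {group {perm V}}) u g h :
  g \in Gu G u -> h \in Gu G u -> (g * h)%g \in Gu G u.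
Proof.
rewrite !inE => /andP[gG /eqP gu] /andP[hG /eqP hu].
by rewrite groupM // permM gu hu eqxx.
Qed.

Lemma GuV (V : finType) (G : {group {perm V}}) u h :
  h \in Gu G u -> (h^-1)%g \in Gu G u.
Proof.
rewrite !inE => /andP[hG /eqP hu].
by rewrite groupV hG -{1}hu permK eqxx.
Qed.

Lemma pactM (V : finType) (g h : {perm V}) p : pact (g * h)%g p = pact h (pact g p).
Proof. by rewrite /pact !permM. Qed.

Lemma pact_inj (V : finType) (h : {perm V}) : injective (pact h).
Proof. by move=> [a b] [c d] [/perm_inj -> /perm_inj ->]. Qed.

Lemma pactVK (V : finType) (h : {perm V}) p : pact h (pact (h^-1)%g p) = p.
Proof. by case: p => a b; rewrite /pact /= !permKV. Qed.

Lemma Orb_closed (V : finType) (G : {group {perm V}}) u p0 p h :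
  p \in Orb G u p0 -> h \in Gu G u -> pact h p \in Orb G u p0.
Proof.
move=> /imsetP[g gG ->] hG.
by rewrite -pactM; apply: imset_f; apply: GuM.
Qed.

Lemma fiber_le (V : finType) (G : {group {perm V}}) u p0 (pr : V * V -> V)
  (Hpr : forall (h : {perm V}) p, pr (pact h p) = h (pr p)) h x :
  h \in Gu G u ->
  #|[set p in Orb G u p0 | pr p == x]| <= #|[set p in Orb G u p0 | pr p == h x]|.
Proof.
move=> hG.
rewrite -(card_imset _ (@pact_inj V h)); apply: subset_leq_card.
apply/subsetP => q /imsetP[p /setIdP[pO /eqP px] ->].
by rewrite inE Hpr px eqxx andbT; apply: Orb_closed.
Qed.

Lemma fiber_eq (V : finType) (G : {group {perm V}}) u p0 (pr : V * V -> V)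
  (Hpr : forall (h : {perm V}) p, pr (pact h p) = h (pr p)) h x :
  h \in Gu G u ->
  #|[set p in Orb G u p0 | pr p == h x]| = #|[set p in Orb G u p0 | pr p == x]|.
Proof.
move=> hG; apply/eqP; rewrite eqn_leq fiber_le //.
have := fiber_le p0 Hpr (h x) (GuV hG); rewrite permK => ->.
done.
Qed.

Lemma Pclosed (V : finType) (e : rel V) (G : {group {perm V}}) u p g :
  automorphisms e G -> p \in Pset e u -> g \in Gu G u -> pact g p \in Pset e u.
Proof.
move=> aut; rewrite !inE => /and3P[h1 h2 h3] /andP[gG /eqP gu].
rewrite /pact /= -{1}gu !aut // h1 h2 /=.
by apply: contra h3 => /eqP; rewrite -{1}gu => /(@perm_inj _ g) ->.
Qed.

Lemma key (V : finType) (e : rel V) (G : {group {perm V}}) (k c2 : nat) u v w v' w' :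
  simple_graph e -> automorphisms e G ->
  (forall u, stab_transitive_on G u (nbhd e u) /\ stab_transitive_on G u (nbhd2 e u)) ->
  regular e k -> 2 <= k -> has_c2 e c2 -> coprime c2 (k - 1) ->
  (forall x y z, ~~ [&& e x y, e y z & e z x]) ->
  (v, w) \in Pset e u -> (v', w') \in Pset e u ->
  exists2 h, h \in G & [/\ h u = u, h v = v' & h w = w'].
Proof.
move=> [sym irr] aut str reg k2 hc2 cop notri vwP vwP'.
set O := Orb G u (v, w).
have PinG2 : forall p, p \in Pset e u -> p.1 \in nbhd e u /\ p.2 \in nbhd2 e u.
  move=> [a b]; rewrite !inE /= => /and3P[h1 h2 h3]; split => //.
  rewrite h3 /=; apply/andP; split.
    by apply: contra (notri u a b) => hub; rewrite h1 h2 sym.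
  by apply/existsP; exists a; rewrite h1 h2.
have OP : forall p, p \in O -> p \in Pset e u.
  by move=> p /imsetP[g gG ->]; exact: (Pclosed aut vwP gG).
have fibP1 : forall y, y \in nbhd e u -> #|[set p in Pset e u | p.1 == y]| = (k - 1)%N.
  move=> y; rewrite inE => uy.
  have -> : [set p in Pset e u | p.1 == y] = (pair y) @: (nbhd e y :\ u).
    apply/setP => -[a b]; rewrite !inE /=; apply/idP/imsetP.
      case/andP=> /and3P[h1 h2 h3] /eqP Ea; exists b => //; last by rewrite Ea.
      by rewrite !inE h3 -Ea h2.
    by move=> [b' ]; rewrite !inE => /andP[h3 h2] [-> ->]; rewrite uy h2 h3 eqxx.
  rewrite card_imset; last by move=> a b [].
  have := cardsD1 u (nbhd e y); rewrite reg !inE sym uy /= => ->.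
  by rewrite add1n subSS subn0.
have cardP1 : #|Pset e u| = (#|nbhd e u| * (k - 1))%N.
  apply: card_fibers fibP1 => p pP; by case: (PinG2 p pP).
have cardP2 : #|Pset e u| = (#|nbhd2 e u| * c2)%N.
  apply: (card_fibers (f := snd)) => [p pP|y y2]; first by case: (PinG2 p pP).
  have -> : [set p in Pset e u | p.2 == y] = (fun x => (x, y)) @: (nbhd e u :&: nbhd e y).
    apply/setP => -[a b]; rewrite !inE /=; apply/idP/imsetP.
      case/andP=> /and3P[h1 h2 h3] /eqP Eb; exists a; last by rewrite Eb.
      by rewrite !inE h1 sym -Eb h2.
    move=> [a' ]; rewrite !inE => /andP[h1 h2] [-> ->]; rewrite h1 sym h2 eqxx /=.
    by move: y2; rewrite inE => /andP[-> _].
  by rewrite card_imset ?hc2 // => a b [].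
set m := #|[set p in O | p.1 == v]|.
set n := #|[set p in O | p.2 == w]|.
have [vu w2] := PinG2 _ vwP.
have cardO1 : #|O| = (#|nbhd e u| * m)%N.
  apply: (card_fibers (f := fst)) => [p pO|y yu]; first by case: (PinG2 p (OP p pO)).
  have [h hG [hu hv]] := (str u).1 v y vu yu.
  have hGu : h \in Gu G u by rewrite inE hG hu eqxx.
  by rewrite -hv (fiber_eq (v, w) (pr := fst)) // => g p.
have cardO2 : #|O| = (#|nbhd2 e u| * n)%N.
  apply: (card_fibers (f := snd)) => [p pO|y yu]; first by case: (PinG2 p (OP p pO)).
  have [h hG [hu hv]] := (str u).2 w y w2 yu.
  have hGu : h \in Gu G u by rewrite inE hG hu eqxx.
  by rewrite -hv (fiber_eq (v, w) (pr := snd)) // => g p.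
have E : (#|nbhd e u| * (m * c2) = #|nbhd e u| * (n * (k - 1)))%N.
  rewrite mulnA -cardO1 cardO2 mulnAC -cardP2 cardP1 -mulnA (mulnC n) //.
have E2 : (m * c2 = n * (k - 1))%N.
  by apply/eqP; rewrite -(eqn_pmul2l (_ : 0 < #|nbhd e u|)) ?E // reg; apply: leq_trans k2.
have dm : (k - 1) %| m.
  have cop' : coprime (k - 1) c2 by rewrite coprime_sym.
  rewrite -(Gauss_dvdl m cop') E2.
  exact: dvdn_mull (dvdnn _).
have Osub : [set p in O | p.1 == v] \subset [set p in Pset e u | p.1 == v].
  apply/subsetP => p /setIdP[pO pv]; apply/setIdP; split => //; exact: OP.
have m0 : 0 < m.
  apply/card_gt0P; exists (v, w); apply/setIdP; split => //.
  have -> : (v, w) = pact 1%g (v, w) by rewrite /pact !perm1.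
  by apply: imset_f; rewrite inE group1 perm1 eqxx.
have mk : m = (k - 1)%N.
  apply/eqP; rewrite eqn_leq (dvdn_leq m0 dm) andbT -(fibP1 v vu).
  exact: subset_leq_card.
have Oeq : [set p in O | p.1 == v] = [set p in Pset e u | p.1 == v].
  apply/eqP; rewrite eqEcard Osub (fibP1 v vu) /=; by rewrite -/m mk.
have [vu' _] := PinG2 _ vwP'.
have [h hG [hu hv]] := (str u).1 v v' vu vu'.
have hGu : h \in Gu G u by rewrite inE hG hu eqxx.
have qO : pact (h^-1)%g (v', w') \in O.
  have : pact (h^-1)%g (v', w') \in [set p in Pset e u | p.1 == v].
    apply/setIdP; split; first exact: (Pclosed aut vwP' (GuV hGu)).
    by rewrite /= -hv permK.
  by rewrite -Oeq => /setIdP[].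
have := Orb_closed qO hGu; rewrite pactVK => /imsetP[g].
rewrite inE => /andP[gG /eqP gu] [-> ->].
by exists g.
Qed.

Theorem lemma5p7 (V : finType) (e : rel V) (G : {group {perm V}}) (k c2 : nat) :
  simple_graph e -> connected_graph e ->
  G2_distance_transitive e G ->
  regular e k -> 2 <= k ->
  has_c2 e c2 -> coprime c2 (k - 1) ->
  girth3 e \/ G2_arc_transitive e G.
Proof.
move=> sg conn [aut diam vt str] reg k2 hc2 cop.
case: (boolP [exists x, [exists y, [exists z, [&& e x y, e y z & e z x]]]]) =>
  [/existsP[x /existsP[y /existsP[z H]]]|notri].
  by left; exists x, y, z.
right; split => // a b ha hb.
have notri' : forall x y z, ~~ [&& e x y, e y z & e z x].
  move=> x y z; apply: contra notri => H.
  by apply/existsP; exists x; apply/existsP; exists y; apply/existsP; exists z.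
case: a ha => [[a0 a1] a2]; case: b hb => [[b0 b1] b2].
rewrite /two_arc /= => /and3P[eb1 eb2 eb3] /and3P[ea1 ea2 ea3].
have [g gG ga] := vt a0 b0.
have P1 : (g a1, g a2) \in Pset e b0.
  rewrite inE /= -ga !aut // ea1 ea2 /=.
  by apply: contra ea3 => /eqP /(@perm_inj _ g) ->.
have P2 : (b1, b2) \in Pset e b0 by rewrite inE /= eb1 eb2 eq_sym eb3.
have [h hG [hu h1 h2]] := key sg aut str reg k2 hc2 cop notri' P1 P2.
exists (g * h)%g; first by rewrite groupM.
by rewrite /= !permM ga hu h1 h2.
Qed.
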